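(* In the setting below, $\langle M^*,\in\rangle$ satisfies the Powerset axiom; concretely, for every $x\in M$ there is $y\in M$ with $y=\mathcal{P}(x)\cap M$ (the collection of all elements of $M$ that are subsets of $x$ belongs to $M$).
   Context: Work in ZFA (ZF with a set $A$ of atoms, i.e. urelements that have no elements), extended by a primitive binary relation $\preccurlyeq$ on $A$, with Separation and Replacement holding for formulas mentioning $\preccurlyeq$. $A$ is an infinite set of atoms and $\preccurlyeq$ is a pre-ordering (reflexive, transitive) on $A$ with no minimal elements: for every $a\in A$ there is $b\in A$ with $b\preccurlyeq a$ and not $a\preccurlyeq b$. For $a\in A$, $pr(a)=\{b\in A:b\preccurlyeq a\}$; $LO(A,\preccurlyeq)$ is the set of nonempty $x\subseteq A$ with $pr(a)\subseteq x$ for all $a\in x$. For a set $X$ of sets, $LO(X,\subseteq)$ is the set of nonempty $x\subseteq X$ such that for every $y\in x$ and every $z\in X$ with $z\subseteq y$, $z\in x$. The magmatic hierarchy: $M_1=LO(A,\preccurlyeq)$; $M_{\alpha+1}=LO(M_\alpha,\subseteq)$ for $\alpha\geq1$; $M_\alpha=\bigcup_{1\leq\beta<\alpha}M_\beta$ for limit $\alpha$; $M=\bigcup_{\alpha\geq1}M_\alpha$. $M^*=M\cup A$, viewed as a structure for the language of ZFA (membership, with sorts for sets and atoms). *)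

(* Defs.v *)
(* A model of ZFA in type theory: Aczel-style well-founded
   trees with atoms, membership taken up to extensional equality. *)
Set Implicit Arguments.

(* A single universe of "small" types: index types of sets, the set of atoms,
   and the well-orders used to index the magmatic hierarchy all live here,
   so that the ordinals indexing the hierarchy are exactly the ordinals of
   the model. *)
Definition U := Type.

Inductive V (A : U) : Type :=
| Atom : A -> V A
| VSet : forall K : U, (K -> V A) -> V A.

Arguments Atom {A} _.
Arguments VSet {A} K _.

Fixpoint veq {A : U} (x : V A) : V A -> Prop :=
  match x return V A -> Prop with
  | Atom a => fun y => match y with Atom b => a = b | VSet _ _ => False end
  | VSet K f => fun y =>
      match y with
      | Atom _ => False
      | VSet J g => (forall i, exists j, veq (f i) (g j)) /\
                    (forall j, exists i, veq (f i) (g j))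
      end
  end.

Definition mem {A : U} (z x : V A) : Prop :=
  match x with
  | Atom _ => False
  | VSet K f => exists i, veq z (f i)
  end.

Definition isSet {A : U} (x : V A) : Prop :=
  match x with Atom _ => False | VSet _ _ => True end.

Definition subset {A : U} (z x : V A) : Prop :=
  forall w, mem w z -> mem w x.

Definition LO_atoms {A : U} (le : A -> A -> Prop) (x : V A) : Prop :=
  isSet x /\ (exists z, mem z x) /\
  (forall z, mem z x -> exists a, veq z (Atom a)) /\
  (forall a b, mem (Atom a) x -> le b a -> mem (Atom b) x).

Definition LO_sub {A : U} (X : V A -> Prop) (x : V A) : Prop :=
  isSet x /\ (exists z, mem z x) /\
  (forall z, mem z x -> X z) /\
  (forall y z, mem y x -> X z -> subset z y -> mem z x).

Definition wellorder {W : U} (lt : W -> W -> Prop) : Prop :=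
  well_founded lt /\
  (forall a b c, lt a b -> lt b c -> lt a c) /\
  (forall a b, lt a b \/ a = b \/ lt b a).

Definition succ_of {W : U} (lt : W -> W -> Prop) (u w : W) : Prop :=
  lt u w /\ forall v, lt u v -> lt v w -> False.

(* F is the magmatic hierarchy along the well-order (W, lt), whose least
   element plays the role of the ordinal 1:
   M_1 = LO(A,≼), M_{α+1} = LO(M_α,⊆), M_λ = ⋃_{1≤β<λ} M_β. *)
Definition magmatic_hier {A : U} (le : A -> A -> Prop) {W : U}
  (lt : W -> W -> Prop) (F : W -> V A -> Prop) : Prop :=
  forall w,
    ((forall u, ~ lt u w) -> forall x, F w x <-> LO_atoms le x) /\
    (forall u, succ_of lt u w -> forall x, F w x <-> LO_sub (F u) x) /\
    ((exists u, lt u w) -> (forall u, ~ succ_of lt u w) ->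
       forall x, F w x <-> exists u, lt u w /\ F u x).

Definition inM {A : U} (le : A -> A -> Prop) (x : V A) : Prop :=
  exists (W : U) (lt : W -> W -> Prop) (F : W -> V A -> Prop) (w : W),
    wellorder lt /\ magmatic_hier le lt F /\ F w x.

(* Main.v *)
Require Import Defs.
From Stdlib Require Import Classical ProofIrrelevance.

Lemma veq_refl {A : U} (x : V A) : veq x x.
Proof. induction x as [a|K f IH]; simpl; auto. split; intro i; exists i; auto. Qed.

Lemma veq_sym {A : U} {x y : V A} : veq x y -> veq y x.
Proof.
  revert y; induction x as [a|K f IH]; intros [b|J g]; simpl; try congruence; try tauto.
  intros [H1 H2]; split.
  - intro j; destruct (H2 j) as [i Hi]; exists i; auto.
  - intro i; destruct (H1 i) as [j Hj]; exists j; auto.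
Qed.

Lemma veq_trans {A : U} (x y z : V A) : veq x y -> veq y z -> veq x z.
Proof.
  revert y z; induction x as [a|K f IH]; intros [b|J g] [c|L h]; simpl; try tauto; try congruence.
  intros [H1 H2] [H3 H4]; split.
  - intro i; destruct (H1 i) as [j Hj]; destruct (H3 j) as [l Hl]; exists l; eauto.
  - intro l; destruct (H4 l) as [j Hj]; destruct (H2 j) as [i Hi]; exists i; eauto.
Qed.

Lemma mem_l {A:U} {z z' x : V A} : veq z z' -> mem z x -> mem z' x.
Proof.
  destruct x as [a|K f]; simpl; auto. intros H [i Hi]; exists i.
  eapply veq_trans; [apply veq_sym|]; eauto.
Qed.

Lemma mem_r {A:U} {z x x' : V A} : veq x x' -> mem z x -> mem z x'.
Proof.
  destruct x as [a|K f], x' as [b|J g]; simpl; try tauto.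
  intros [H1 _] [i Hi]. destruct (H1 i) as [j Hj]; exists j; eapply veq_trans; eauto.
Qed.

Lemma isSet_inv {A:U} (x x' : V A) : veq x x' -> isSet x -> isSet x'.
Proof. destruct x, x'; simpl; tauto. Qed.

Lemma LO_atoms_inv {A:U} (le : A -> A -> Prop) (x x' : V A) :
  veq x x' -> LO_atoms le x -> LO_atoms le x'.
Proof.
  intros E [H1 [[z Hz] [H3 H4]]]. split; [eapply isSet_inv; eauto|split; [|split]].
  - exists z; eapply mem_r; eauto.
  - intros z' Hz'; apply H3; eapply mem_r; [apply veq_sym, E|exact Hz'].
  - intros a b Ha Hb. eapply mem_r; [exact E|]. apply (H4 a b); auto.
    eapply mem_r; [apply veq_sym, E|exact Ha].
Qed.

Lemma LO_sub_inv {A:U} (X : V A -> Prop) (x x' : V A) :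
  veq x x' -> LO_sub X x -> LO_sub X x'.
Proof.
  intros E [H1 [[z Hz] [H3 H4]]]. split; [eapply isSet_inv; eauto|split; [|split]].
  - exists z; eapply mem_r; eauto.
  - intros z' Hz'; apply H3; eapply mem_r; [apply veq_sym, E|exact Hz'].
  - intros a b Ha Hb Hs. eapply mem_r; [exact E|]. apply (H4 a b); auto.
    eapply mem_r; [apply veq_sym, E|exact Ha].
Qed.

Lemma wcases {W:U} (lt : W -> W -> Prop) w :
  (forall u, ~ lt u w) \/ (exists u, succ_of lt u w) \/
  ((exists u, lt u w) /\ (forall u, ~ succ_of lt u w)).
Proof.
  destruct (classic (exists u, lt u w)) as [H|H].
  - destruct (classic (exists u, succ_of lt u w)) as [H'|H'];
      [right;left;auto| right;right; split; auto].
    intros u Hu; apply H'; eauto.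
  - left; intros u Hu; apply H; eauto.
Qed.

Lemma level_inv {A:U} {le : A -> A -> Prop} {W:U} {lt : W -> W -> Prop} {F : W -> V A -> Prop}
  (Hwo : wellorder lt) (Hh : magmatic_hier le lt F) :
  forall w x x', F w x -> veq x x' -> F w x'.
Proof.
  destruct Hwo as [Hwf _].
  intro w; induction (Hwf w) as [w _ IH]; intros x x' Hx Hv.
  destruct (Hh w) as [H1 [H2 H3]].
  destruct (wcases lt w) as [C|[[u C]|[C1 C2]]].
  - apply (H1 C); apply (H1 C) in Hx; eapply LO_atoms_inv; eauto.
  - apply (H2 u C); apply (H2 u C) in Hx; eapply LO_sub_inv; eauto.
  - apply (H3 C1 C2); apply (H3 C1 C2) in Hx; destruct Hx as [u [Hu Hx]]; exists u; split; eauto.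
Qed.

Lemma level_set {A:U} {le : A -> A -> Prop} {W:U} {lt : W -> W -> Prop} {F : W -> V A -> Prop}
  (Hwo : wellorder lt) (Hh : magmatic_hier le lt F) :
  forall w x, F w x -> isSet x /\ exists z, mem z x.
Proof.
  destruct Hwo as [Hwf _].
  intro w; induction (Hwf w) as [w _ IH]; intros x Hx.
  destruct (Hh w) as [H1 [H2 H3]].
  destruct (wcases lt w) as [C|[[u C]|[C1 C2]]].
  - apply (H1 C) in Hx; destruct Hx as [? [? _]]; auto.
  - apply (H2 u C) in Hx; destruct Hx as [? [? _]]; auto.
  - apply (H3 C1 C2) in Hx; destruct Hx as [u [Hu Hx]]; eauto.
Qed.

Lemma level_atom {A:U} {le : A -> A -> Prop} {W:U} {lt : W -> W -> Prop} {F : W -> V A -> Prop}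
  (Hwo : wellorder lt) (Hh : magmatic_hier le lt F) :
  forall w x a, F w x -> mem (Atom a) x -> LO_atoms le x.
Proof.
  pose proof (proj1 Hwo) as Hwf.
  intro w; induction (Hwf w) as [w _ IH]; intros x a Hx Ha.
  destruct (Hh w) as [H1 [H2 H3]].
  destruct (wcases lt w) as [C|[[u C]|[C1 C2]]].
  - apply (H1 C) in Hx; auto.
  - apply (H2 u C) in Hx; destruct Hx as [_ [_ [Hm _]]].
    destruct (level_set Hwo Hh _ _ (Hm _ Ha)) as [[] _].
  - apply (H3 C1 C2) in Hx; destruct Hx as [u [Hu Hx]]; eauto.
Qed.

Lemma inM_inv {A:U} {le : A -> A -> Prop} {x x' : V A} : inM le x -> veq x x' -> inM le x'.
Proof.
  intros [W [lt [F [w [Hwo [Hh Hx]]]]]] E.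
  exists W, lt, F, w; split; [|split]; auto. eapply level_inv; eauto.
Qed.

Lemma keyL {A:U} {le : A -> A -> Prop} (u : V A) :
  forall (W:U) (lt : W -> W -> Prop) (F : W -> V A -> Prop), wellorder lt -> magmatic_hier le lt F ->
  forall b, F b u -> forall v, inM le v -> subset v u -> F b v.
Proof.
  induction u as [a|K f IHu]; intros W lt F Hwo Hh b Hb v Hv Hsub.
  - exfalso. destruct (level_set Hwo Hh _ _ Hb) as [[] _].
  - revert Hb v Hv Hsub; induction (proj1 Hwo b) as [b _ IHb]; intros Hb v Hv Hsub.
    destruct (Hh b) as [H1 [H2 H3]].
    destruct (wcases lt b) as [C|[[u0 C]|[C1 C2]]].
    + apply H1 in Hb; auto. apply (H1 C).
      destruct Hv as [W2 [lt2 [F2 [d [Hwo2 [Hh2 Hd]]]]]].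
      destruct (level_set Hwo2 Hh2 _ _ Hd) as [_ [z Hz]].
      pose proof (Hsub z Hz) as Hzu.
      destruct Hb as [_ [_ [Hat _]]]. destruct (Hat z Hzu) as [a Ha].
      apply (level_atom Hwo2 Hh2 d v a Hd). eapply mem_l; eauto.
    + apply (H2 u0 C) in Hb; apply (H2 u0 C).
      destruct Hb as [_ [_ [Hmem _]]].
      destruct Hv as [W2 [lt2 [F2 [d [Hwo2 [Hh2 Hd]]]]]].
      destruct (level_set Hwo2 Hh2 _ _ Hd) as [Hs Hne].
      split; [|split;[|split]]; auto.
      clear Hs Hne.
      revert v Hd Hsub; induction (proj1 Hwo2 d) as [d _ IHd]; intros v Hd Hsub.
      destruct (Hh2 d) as [G1 [G2 G3]].
      destruct (wcases lt2 d) as [D|[[d0 D]|[D1 D2]]].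
      * apply (G1 D) in Hd. intros s t Hs _ _. exfalso.
        destruct Hd as [_ [_ [Hat _]]]. destruct (Hat s Hs) as [a Ha].
        pose proof (Hmem s (Hsub s Hs)) as Fs.
        pose proof (level_inv Hwo Hh _ _ _ Fs Ha) as Fa.
        destruct (level_set Hwo Hh _ _ Fa) as [[] _].
      * apply (G2 d0 D) in Hd. destruct Hd as [_ [_ [Hm2 Hdown]]].
        intros s t Hs Ft Hts. apply (Hdown s t Hs); auto.
        destruct (Hsub s Hs) as [k Hk].
        apply (IHu k W2 lt2 F2 Hwo2 Hh2 d0).
        -- eapply level_inv; eauto.
        -- exists W, lt, F, u0; auto.
        -- intros w Hw; eapply mem_r; [exact Hk| apply Hts, Hw].
      * apply (G3 D1 D2) in Hd. destruct Hd as [d1 [Hd1 Hd]]. eapply IHd; eauto.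
    + apply (H3 C1 C2) in Hb; destruct Hb as [b1 [Hb1 Hb]]. apply (H3 C1 C2).
      exists b1; split; [exact Hb1| eapply IHb; eauto].
Qed.

Definition seg {W:U} (lt : W -> W -> Prop) (w : W) : U := {u : W | lt u w \/ u = w}.
Definition tW {W:U} (lt : W -> W -> Prop) (w : W) : U := option (seg lt w).
Definition tlt {W:U} (lt : W->W->Prop) w (a b : tW lt w) : Prop :=
  match a, b with
  | Some a, Some b => lt (proj1_sig a) (proj1_sig b)
  | Some _, None => True
  | None, _ => False end.
Definition tF {A:U} {W:U} (lt:W->W->Prop) (F : W -> V A -> Prop) w (a : tW lt w) (x : V A) : Prop :=
  match a with Some a => F (proj1_sig a) x | None => LO_sub (F w) x end.

Lemma wf_irrefl {W:U} (lt : W -> W -> Prop) : well_founded lt -> forall a, ~ lt a a.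
Proof.
  intros Hwf a; induction (Hwf a) as [a _ IH]; intro H; exact (IH a H H).
Qed.

Lemma trunc_wo {W:U} (lt : W -> W -> Prop) w : wellorder lt -> wellorder (tlt lt w).
Proof.
  intros [Hwf [Htr Htri]]. split; [|split].
  - assert (HS : forall a0 (p : lt a0 w \/ a0 = w), Acc (tlt lt w) (Some (exist _ a0 p))).
    { intro a0; induction (Hwf a0) as [a0 _ IH]; intro p. constructor.
      intros [[b q]|] H; simpl in H; [apply IH; exact H| contradiction]. }
    intros [[a0 p]|]; [apply HS|]. constructor; intros [[b q]|] H; simpl in H; [apply HS|contradiction].
  - intros [a|] [b|] [c|]; simpl; try tauto; apply Htr.
  - intros [[a p]|] [[b q]|]; simpl; auto.
    destruct (Htri a b) as [H|[H|H]]; auto. right; left. destruct H.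
    rewrite (proof_irrelevance _ p q); reflexivity.
Qed.

Lemma trunc_hier {A:U} (le : A->A->Prop) {W:U} (lt:W->W->Prop) F w :
  wellorder lt -> magmatic_hier le lt F -> magmatic_hier le (tlt lt w) (tF lt F w).
Proof.
  intros [Hwf [Htr Htri]] Hh. intros [[b p]|]; simpl.
  - destruct (Hh b) as [H1 [H2 H3]].
    assert (Inseg : forall u, lt u b -> lt u w \/ u = w).
    { intros u Hu; left; destruct p as [p|p]; [eapply Htr; eauto| subst; auto]. }
    split; [|split].
    + intros C x. apply H1. intros u Hu. apply (C (Some (exist _ u (Inseg u Hu)))). exact Hu.
    + intros [[c q]|] [Hc Hn] x; simpl in *; [|contradiction].
      apply H2. split; auto. intros v Hv1 Hv2. apply (Hn (Some (exist _ v (Inseg v Hv2)))); simpl; auto.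
    + intros [[[c q]|] Hc] Hn x; simpl in Hc; [|contradiction].
      assert (Hn' : forall u, ~ succ_of lt u b).
      { intros u [Hu Hun]. apply (Hn (Some (exist _ u (Inseg u Hu)))). split; [exact Hu|].
        intros [[v r]|] Hv1 Hv2; simpl in *; [eapply Hun; eauto| contradiction]. }
      pose proof (H3 (ex_intro _ c Hc) Hn' x) as E.
      apply (iff_trans E). split.
      * intros [u [Hu Fu]]. exists (Some (exist _ u (Inseg u Hu))). simpl; auto.
      * intros [[[u r]|] [Hu Fu]]; simpl in *; [eauto| contradiction].
  - split; [|split].
    + intros C x. exfalso. apply (C (Some (exist _ w (or_intror eq_refl)))). exact I.
    + intros [[c q]|] [Hc Hn] x; simpl in *; [|contradiction].
      destruct q as [q|q].
      * exfalso. apply (Hn (Some (exist _ w (or_intror eq_refl)))); simpl; auto.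
      * destruct q. split; intro H; exact H.
    + intros _ Hn x. exfalso. apply (Hn (Some (exist _ w (or_intror eq_refl)))).
      split; [exact I|]. intros [[v r]|] Hv1 Hv2; simpl in *; [|contradiction].
      destruct r as [r|r].
      * exact (wf_irrefl lt Hwf w (Htr _ _ _ Hv1 r)).
      * subst v. exact (wf_irrefl lt Hwf w Hv1).
Qed.

Theorem proposition4p11 (A : U) (le : A -> A -> Prop)
  (A_infinite : exists f : nat -> A, forall m n, f m = f n -> m = n)
  (le_refl : forall a, le a a)
  (le_trans : forall a b c, le a b -> le b c -> le a c)
  (no_min : forall a, exists b, le b a /\ ~ le a b) :
  forall x : V A, inM le x ->
    exists y : V A, inM le y /\
      (forall z : V A, mem z y <-> (inM le z /\ subset z x)).
Proof.
  intros x [W [lt [F [w [Hwo [Hh Hx]]]]]].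
  destruct x as [a|K f]. { exfalso; destruct (level_set Hwo Hh _ _ Hx) as [[] _]. }
  pose (I := {P : K -> Prop | inM le (VSet {k | P k} (fun k => f (proj1_sig k)))}).
  pose (y := VSet I (fun p => VSet {k | proj1_sig p k} (fun k => f (proj1_sig k)))).
  assert (Hmem : forall z, mem z y <-> inM le z /\ subset z (VSet K f)).
  { intro z; split.
    - intros [p Hp]. split.
      + exact (inM_inv (proj2_sig p) (veq_sym Hp)).
      + intros t Ht. destruct (mem_r Hp Ht) as [[k Pk] Hk]. exists k; exact Hk.
    - intros [Hz Hs].
      assert (isSet z) as Zs.
      { destruct Hz as [W2 [lt2 [F2 [d [Hwo2 [Hh2 Hd]]]]]].
        exact (proj1 (level_set Hwo2 Hh2 _ _ Hd)). }
      destruct z as [b|J g]; [contradiction|].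
      set (P := fun k => mem (f k) (VSet J g)).
      assert (E : veq (VSet J g) (VSet {k | P k} (fun k => f (proj1_sig k)))).
      { simpl; split.
        - intro j. destruct (Hs (g j) (ex_intro _ j (veq_refl _))) as [k Hk].
          exists (exist _ k (ex_intro _ j (veq_sym Hk))). exact Hk.
        - intros [k [j Hj]]. exists j. apply veq_sym; exact Hj. }
      exists (exist _ P (inM_inv Hz E)). exact E. }
  exists y; split; [|exact Hmem].
  exists (tW lt w), (tlt lt w), (tF lt F w), None.
  split; [apply trunc_wo; exact Hwo|split; [apply trunc_hier; assumption|]].
  simpl. split; [exact Logic.I|split; [|split]].
  - exists (VSet K f); apply Hmem; split; [exists W, lt, F, w; auto| intros t Ht; exact Ht].
  - intros z Hz; apply Hmem in Hz as [Hz1 Hz2]. exact (keyL _ _ _ _ Hwo Hh _ Hx _ Hz1 Hz2).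
  - intros y0 z Hy0 Fz Hzy0. apply Hmem. apply Hmem in Hy0 as [_ Hy0].
    split; [exists W, lt, F, w; auto | intros t Ht; apply Hy0, Hzy0, Ht].
Qed.
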